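(* Let $\vec{s}(x,y)=(x,y,\zeta(x,y))^{\mathsf T}$ be a smooth Monge-patch parametrization of a surface over the image plane, and fix an image point at which the slant satisfies $0\le\sigma<\pi/2$. Let $\mathcal{D}\vec{s}=U\Sigma V^{\mathsf T}$ be the singular value decomposition of the $3\times 2$ Jacobian $\mathcal{D}\vec{s}$, where $U$ is $3\times 2$ with orthonormal columns spanning the tangent plane (first column: the unit tangent vector in the direction of maximal slant, i.e. the tilt direction lifted to the surface), $\Sigma=\begin{pmatrix}\frac{1}{\cos\sigma}&0\\0&1\end{pmatrix}$, and $V$ is the $2\times 2$ rotation matrix by the tilt angle $\tau$ (its first column is the tilt direction in the image). Let $W$ be the $2\times 2$ orthogonal matrix whose columns are the principal directions expressed in the orthonormal tangent-plane basis given by the columns of $U$, and $K=\operatorname{diag}(\kappa_1,\kappa_2)$ the diagonal matrix of the corresponding principal curvatures, with $\kappa_1\kappa_2\neq 0$. Then the $3\times 2$ Jacobian $\mathcal{D}\vec{n}$ of the unit normal field $\vec{n}$ (as a function of image position) and its Moore–Penrose pseudo-inverse satisfy $$\mathcal{D}\vec{n}=U W K W^{\mathsf T}\Sigma V^{\mathsf T},\qquad \mathcal{D}\vec{n}^{+}=V\Sigma^{-1}WK^{-1}W^{\mathsf T}U^{\mathsf T}.$$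
   Context: The unit normal is $\vec{n}(x,y)=\frac{\vec{s}_x\times\vec{s}_y}{\|\vec{s}_x\times\vec{s}_y\|}$, viewed as a map from the image plane to the unit sphere; $\mathcal{D}\vec{n}$ is its $3\times2$ Jacobian with respect to image coordinates $(x,y)$. The Gauss map $\tilde{\vec{n}}$ sends a surface point to its unit normal; its differential $\mathcal{D}\tilde{\vec{n}}$ (shape operator) is a self-adjoint linear map of the tangent plane; the principal curvatures $\kappa_1,\kappa_2$ are its eigenvalues and the principal directions are its orthonormal eigenvectors. Slant $\sigma$ is the angle between the surface normal and the viewing ($z$) axis; tilt $\tau$ is the image direction of the gradient of $\zeta$. $A^{+}$ denotes the Moore–Penrose pseudo-inverse. *)

(* Defs.v *)
From HB Require Import structures.
From mathcomp Require Import all_boot all_order all_algebra.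
From mathcomp Require Import all_classical all_reals all_analysis.
Set Implicit Arguments. Unset Strict Implicit. Unset Printing Implicit Defensive.
Import Order.TTheory GRing.Theory Num.Theory.
Import numFieldNormedType.Exports.
Local Open Scope ring_scope.

Section Defs.
Variable R : realType.

Definition partial_x (f : R -> R -> R) (x y : R) : R := derive1 (fun t => f t y) x.
Definition partial_y (f : R -> R -> R) (x y : R) : R := derive1 (fun t => f x t) y.

Fixpoint Ck (k : nat) (f : R -> R -> R) : Prop :=
  match k with
  | 0 => continuous (fun p : R * R => f p.1 p.2)
  | k'.+1 => continuous (fun p : R * R => f p.1 p.2) /\
      (forall x y, derivable (fun t => f t y) x 1 /\ derivable (fun t => f x t) y 1) /\
      Ck k' (partial_x f) /\ Ck k' (partial_y f)
  end.

Definition smooth2 (f : R -> R -> R) : Prop := forall k, Ck k f.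

Definition jac32 (F : R -> R -> 'cV[R]_3) (x y : R) : 'M[R]_(3, 2) :=
  \matrix_(i < 3, j < 2)
    if j == ord0 then partial_x (fun a b => F a b i ord0) x y
    else partial_y (fun a b => F a b i ord0) x y.

Definition monge (zeta : R -> R -> R) (x y : R) : 'cV[R]_3 :=
  \col_(i < 3) (if i == 0%N :> nat then x else if i == 1%N :> nat then y else zeta x y).

Definition cross (u v : 'cV[R]_3) : 'cV[R]_3 :=
  \col_(i < 3)
    (if i == 0%N :> nat then u (inord 1) ord0 * v (inord 2) ord0 - u (inord 2) ord0 * v (inord 1) ord0
     else if i == 1%N :> nat then u (inord 2) ord0 * v (inord 0) ord0 - u (inord 0) ord0 * v (inord 2) ord0
     else u (inord 0) ord0 * v (inord 1) ord0 - u (inord 1) ord0 * v (inord 0) ord0).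

Definition vnorm (u : 'cV[R]_3) : R := Num.sqrt (\sum_(i < 3) u i ord0 ^+ 2).

Definition unit_normal (zeta : R -> R -> R) (x y : R) : 'cV[R]_3 :=
  let Ds := jac32 (monge zeta) x y in
  let c := cross (col ord0 Ds) (col (inord 1) Ds) in
  (vnorm c)^-1 *: c.

(* S is the matrix, in the orthonormal tangent basis given by the columns of U,
   of the differential of the Gauss map (shape operator): the tangent vector
   with U-coordinates a, i.e. U a = Ds v, is sent to Dn v (= D(n~ o s) v). *)
Definition shape_matrix (Dn Ds U : 'M[R]_(3, 2)) (S : 'M[R]_2) : Prop :=
  forall v a : 'cV[R]_2, Ds *m v = U *m a -> Dn *m v = U *m (S *m a).

Definition diag2 (a b : R) : 'M[R]_2 :=
  \matrix_(i < 2, j < 2) (if i == j then (if i == ord0 then a else b) else 0).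

Definition rot2 (t : R) : 'M[R]_2 :=
  \matrix_(i < 2, j < 2)
    (if i == ord0 then (if j == ord0 then cos t else - sin t)
     else (if j == ord0 then sin t else cos t)).


Definition principal_frame (Dn Ds U : 'M[R]_(3, 2)) (W : 'M[R]_2) (k1 k2 : R) : Prop :=
  W^T *m W = 1%:M /\
  (exists S : 'M[R]_2, [/\ shape_matrix Dn Ds U S,
    S *m col ord0 W = k1 *: col ord0 W & S *m col (inord 1) W = k2 *: col (inord 1) W]).

Definition is_pinv (m n : nat) (A : 'M[R]_(m, n)) (B : 'M[R]_(n, m)) : Prop :=
  [/\ A *m B *m A = A, B *m A *m B = B, (A *m B)^T = A *m B & (B *m A)^T = B *m A].

End Defs.

(* Main.v *)
Require Import Defs.
From HB Require Import structures.
From mathcomp Require Import all_boot all_order all_algebra.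
From mathcomp Require Import all_classical all_reals all_analysis.
From mathcomp Require Import ring.
Import Order.TTheory GRing.Theory Num.Theory.
Local Open Scope ring_scope.

Lemma canc (R : comPzRingType) (m n p : nat) (A : 'M[R]_(n, p)) (B : 'M[R]_(p, n)) (X : 'M[R]_(m, n)) :
  A *m B = 1%:M -> X *m A *m B = X.
Proof. by move=> h; rewrite -mulmxA h mulmx1. Qed.
Arguments canc {R m n p A B} X.

Lemma col_ext (R : comPzRingType) (m n : nat) (A B : 'M[R]_(m, n)) :
  (forall v : 'cV_n, A *m v = B *m v) -> A = B.
Proof.
move=> h; apply/matrixP => i j.
have := congr1 (fun M : 'cV[R]_m => M i ord0) (h (delta_mx j 0)).
by rewrite -!colE !mxE.
Qed.

Lemma colext (R : comPzRingType) (m n : nat) (A B : 'M[R]_(m, n)) :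
  (forall j, col j A = col j B) -> A = B.
Proof.
move=> h; apply/matrixP => i j.
by have := congr1 (fun M : 'cV[R]_m => M i ord0) (h j); rewrite !mxE.
Qed.

Lemma diag2_inv (R : realType) (a b : R) : a != 0 -> b != 0 ->
  diag2 a b *m diag2 a^-1 b^-1 = 1%:M.
Proof.
move=> ha hb; apply/matrixP => i j; rewrite !mxE !big_ord_recr big_ord0 /= ?add0r !mxE.
case: i => [[|[|//]] hi]; case: j => [[|[|//]] hj] /=;
  rewrite ?mulr0 ?mul0r ?addr0 ?add0r ?divff //.
Qed.

Theorem mainTheorem1 (R : realType) (zeta : R -> R -> R) (x0 y0 : R)
    (sigma tau : R) (U : 'M[R]_(3, 2)) (W : 'M[R]_2) (kappa1 kappa2 : R) :
  smooth2 zeta ->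
  (* slant: angle between the unit normal and the viewing (z) axis *)
  0 <= sigma < pi / 2 ->
  cos sigma = unit_normal zeta x0 y0 (inord 2) ord0 ->
  (* tilt: image direction of the gradient of zeta *)
  let zx := partial_x zeta x0 y0 in
  let zy := partial_y zeta x0 y0 in
  zx = Num.sqrt (zx ^+ 2 + zy ^+ 2) * cos tau ->
  zy = Num.sqrt (zx ^+ 2 + zy ^+ 2) * sin tau ->
  let Ds := jac32 (monge zeta) x0 y0 in
  let Dn := jac32 (unit_normal zeta) x0 y0 in
  let Sigma := diag2 (cos sigma)^-1 1 in
  let V := rot2 tau in
  (* SVD of Ds, U with orthonormal columns *)
  U^T *m U = 1%:M ->
  Ds = U *m Sigma *m V^T ->
  (* principal directions / curvatures in the U-basis *)
  principal_frame Dn Ds U W kappa1 kappa2 ->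
  kappa1 * kappa2 != 0 ->
  let K := diag2 kappa1 kappa2 in
  Dn = U *m W *m K *m W^T *m Sigma *m V^T /\
  is_pinv Dn (V *m invmx Sigma *m W *m invmx K *m W^T *m U^T).
Proof.
move=> _ /andP[s0 s1] _ zx zy _ _ Ds Dn Sigma V hU hDs [hWW [S [hS h1 h2]]] hk K.
have hc : cos sigma != 0.
  rewrite gt_eqF // cos_gt0_pihalf // s1 andbT.
  by apply: (lt_le_trans _ s0); rewrite oppr_lt0 divr_gt0 // pi_gt0.
have k1 : kappa1 != 0 by move: hk; rewrite mulf_eq0 negb_or => /andP[].
have k2 : kappa2 != 0 by move: hk; rewrite mulf_eq0 negb_or => /andP[].
have hDn : Dn = U *m (S *m Sigma *m V^T).
  apply: col_ext => v; rewrite -!mulmxA.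
  apply: hS; by rewrite hDs !mulmxA.
have hSW : S *m W = W *m K.
  apply: colext => j.
  rewrite !colE -!mulmxA -!colE.
  have hK : forall j0 : 'I_2, col j0 K = (if j0 == ord0 then kappa1 else kappa2) *: delta_mx j0 0.
    move=> j0; apply/matrixP => i k; rewrite !mxE ord1 eqxx ?mulr1.
    case: i => [[|[|//]] hi]; case: j0 => [[|[|//]] hj] /=; rewrite ?mulr1 ?mulr0 //.
  rewrite hK -scalemxAr -colE.
  case: j => [[|[|//]] hj] /=.
  - by have -> : Ordinal hj = ord0 by apply/val_inj.
  - by have -> : Ordinal hj = inord 1 by apply/val_inj; rewrite /= inordK.
have hWW' : W *m W^T = 1%:M by apply: mulmx1C.
have hSe : S = W *m K *m W^T by rewrite -hSW -mulmxA hWW' mulmx1.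
have hD : Dn = U *m W *m K *m W^T *m Sigma *m V^T by rewrite hDn hSe !mulmxA.
split=> //.
have hSi : Sigma *m invmx Sigma = 1%:M.
  apply: mulmxV; case: (mulmx1_unit (@diag2_inv R _ _ (invr_neq0 hc) (oner_neq0 R : (1:R) != 0))) => //.
have hSi' : invmx Sigma *m Sigma = 1%:M by apply: mulmx1C.
have hKi : K *m invmx K = 1%:M.
  apply: mulmxV; by case: (mulmx1_unit (@diag2_inv R _ _ k1 k2)).
have hKi' : invmx K *m K = 1%:M by apply: mulmx1C.
have hVV : V^T *m V = 1%:M.
  have cs := cos2Dsin2 tau.
  apply/matrixP => i j; rewrite !mxE !big_ord_recr big_ord0 /= ?add0r.
  case: i => [[|[|//]] hi]; case: j => [[|[|//]] hj]; rewrite !mxE /=.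
  - by rewrite -!expr2.
  - by rewrite mulrN mulrC addrC subrr.
  - by rewrite mulNr mulrC addrC subrr.
  - by rewrite mulrNN -!expr2 addrC.
have hVV' : V *m V^T = 1%:M by apply: mulmx1C.
have hDB : Dn *m (V *m invmx Sigma *m W *m invmx K *m W^T *m U^T) = U *m U^T.
  rewrite hD !mulmxA (canc _ hVV) (canc _ hSi) (canc _ hWW) (canc _ hKi) (canc _ hWW') //.
have hBD : (V *m invmx Sigma *m W *m invmx K *m W^T *m U^T) *m Dn = 1%:M.
  rewrite hD !mulmxA (canc _ hU) (canc _ hWW) (canc _ hKi') (canc _ hWW') (canc _ hSi') //.
split.
- by rewrite hDB hD !mulmxA (canc _ hU).
- by rewrite hBD mul1mx.
- by rewrite hDB trmx_mul trmxK.
- by rewrite hBD trmx1.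
Qed.
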